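(* Let $d$ be a defined $n$-ary operator and let $e_1,\ldots,e_n$ be expressions. Let $i\in\{1,\ldots,n\}$ be such that $e_i$ is rigid. Let $\mathcal{M}$ be a Kripke model and $w$ a state of $\mathcal{M}$, and let $x$ be a rigid variable that does not occur free in any $e_j$. Then $$[\![d(e_1,\ldots,e_n)]\!]^\mathcal{M}_w=[\![d(e_1,\ldots,e_{i-1},x,e_{i+1},\ldots,e_n)]\!]^{\mathcal{M}'}_w,$$ where $\mathcal{M}'$ agrees with $\mathcal{M}$ except that its valuation of rigid variables maps $x$ to $[\![e_i]\!]^\mathcal{M}_w$.
   Context: FOML syntax. Fix disjoint, non-empty, denumerable sets $\mathcal{X}$ (rigid variables), $\mathcal{V}$ (flexible variables) and $\mathcal{O}$ (operator symbols with arities). Expressions are given by $e ::= x \mid v \mid op(e,\ldots,e) \mid e=e \mid \mathrm{FALSE} \mid e\Rightarrow e \mid \forall x:e \mid \nabla e \mid d(e,\ldots,e)$, where $d$ ranges over defined operators. Only rigid variables are bound. Operator definitions. A definition has the form $d(x_1,\ldots,x_n)\triangleq e$, where: - $d$ is a fresh symbol; - $x_1,\ldots,x_n$ are pairwise distinct rigid variables; - $e$ is an expression, possibly using flexible variables and previously defined operators, whose free rigid variables are among $x_1,\ldots,x_n$. An expression is rigid iff, after all defined operators are fully expanded, it contains no flexible variable and no subexpression $\nabla e$. Semantics. A Kripke model is $\mathcal{M}=(\mathcal{I},\xi,\mathcal{W},R,\zeta,\nabla_\mathcal{M})$, where: - $\mathcal{I}$ is a first-order interpretation with distinct values $\mathsf{tt},\mathsf{ff}$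 in its universe; - $\xi:\mathcal{X}\to|\mathcal{I}|$; - $\mathcal{W}$ is a non-empty set of states and $R\subseteq\mathcal{W}^2$; - $\zeta:\mathcal{V}\times\mathcal{W}\to|\mathcal{I}|$; - $\nabla_\mathcal{M}:2^{|\mathcal{I}|}\to|\mathcal{I}|$ satisfies $\nabla_\mathcal{M}(S)=\mathsf{tt}$ iff $S\subseteq\{\mathsf{tt}\}$. Values are defined as follows. - $[\![x]\!]_w=\xi(x)$ and $[\![v]\!]_w=\zeta(v,w)$. - $[\![op(\vec e)]\!]_w=\mathcal{I}(op)(\ldots)$. - $[\![e_1=e_2]\!]_w$ is $\mathsf{tt}$ iff the values are equal, and $\mathsf{ff}$ otherwise. - $[\![\mathrm{FALSE}]\!]_w=\mathsf{ff}$. - $[\![\varphi\Rightarrow\psi]\!]_w=\mathsf{tt}$ iff $[\![\varphi]\!]_w\ne\mathsf{tt}$ or $[\![\psi]\!]_w=\mathsf{tt}$, and $\mathsf{ff}$ otherwise. - $\forall$ quantifies over the rigid variable valuation only, as usual. - $[\![\nabla\varphi]\!]_w=\nabla_\mathcal{M}(\{[\![\varphi]\!]_{w'}:(w,w')\in R\})$. - For $d(x_1,\ldots,x_n)\triangleq e$, $[\![d(e_1,\ldots,e_n)]\!]^\mathcal{M}_w=[\![e[e_1/x_1,\ldots,e_n/x_n]]\!]^\mathcal{M}_w$, using capture-avoiding substitution. *)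

(* Defs.v *)
From Stdlib Require Import List Arith ClassicalEpsilon.
Import ListNotations.
Set Implicit Arguments.

Inductive expr : Type :=
| RVar  (x : nat)
| FVar  (v : nat)
| Op    (o : nat) (args : list expr)
| Eq    (a b : expr)
| FALSE
| Imp   (a b : expr)
| All   (x : nat) (e : expr)      (* \forall x : e, x rigid *)
| Nab   (e : expr)
| Def   (d : nat) (args : list expr).

Fixpoint maxv (e : expr) : nat :=
  match e with
  | RVar x => x
  | FVar _ | FALSE => 0
  | Op _ es | Def _ es => list_max (map maxv es)
  | Eq a b | Imp a b => Nat.max (maxv a) (maxv b)
  | All x b => Nat.max x (maxv b)
  | Nab b => maxv b
  end.

Fixpoint fv (e : expr) : list nat :=
  match e with
  | RVar x => [x]
  | FVar _ | FALSE => []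
  | Op _ es | Def _ es => flat_map fv es
  | Eq a b | Imp a b => fv a ++ fv b
  | All x b => remove Nat.eq_dec x (fv b)
  | Nab b => fv b
  end.

Definition upd {A : Type} (f : nat -> A) (x : nat) (a : A) : nat -> A :=
  fun z => if Nat.eqb z x then a else f z.

(* Capture-avoiding simultaneous substitution for rigid variables:
   the bound variable is always renamed to a variable fresh for the body
   and for the substituted expressions. *)
Fixpoint subst (s : nat -> expr) (e : expr) : expr :=
  match e with
  | RVar x => s x
  | FVar v => FVar v
  | Op o es => Op o (map (subst s) es)
  | Eq a b => Eq (subst s a) (subst s b)
  | FALSE => FALSE
  | Imp a b => Imp (subst s a) (subst s b)
  | All x b =>
      let y := S (Nat.max (maxv b) (list_max (map (fun z => maxv (s z)) (fv e)))) in
      All y (subst (upd s x (RVar y)) b)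
  | Nab b => Nab (subst s b)
  | Def d es => Def d (map (subst s) es)
  end.

Fixpoint mk_sub (xs : list nat) (es : list expr) (z : nat) : expr :=
  match xs, es with
  | x :: xs', e :: es' => if Nat.eqb z x then e else mk_sub xs' es' z
  | _, _ => RVar z
  end.

(* A definition d(x_1,...,x_n) == body is the pair (xs, body); the operator
   named d is the d-th entry of the definition list. *)
Definition defn := (list nat * expr)%type.

(* Full expansion of defined operators, relative to a table of already
   fully expanded bodies. *)
Fixpoint expand (tbl : list defn) (e : expr) : expr :=
  match e with
  | RVar x => RVar x
  | FVar v => FVar v
  | Op o es => Op o (map (expand tbl) es)
  | Eq a b => Eq (expand tbl a) (expand tbl b)
  | FALSE => FALSE
  | Imp a b => Imp (expand tbl a) (expand tbl b)
  | All x b => All x (expand tbl b)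
  | Nab b => Nab (expand tbl b)
  | Def d es =>
      match nth_error tbl d with
      | Some (xs, b) => subst (mk_sub xs (map (expand tbl) es)) b
      | None => FALSE
      end
  end.

(* expanded bodies, computed in order (each body uses only earlier operators) *)
Definition exp_table (defs : list defn) : list defn :=
  fold_left (fun acc (p : defn) => acc ++ [(fst p, expand acc (snd p))]) defs [].

Definition full_expand (defs : list defn) (e : expr) : expr :=
  expand (exp_table defs) e.

Fixpoint wf_expr (ar : nat -> nat) (defs : list defn) (k : nat) (e : expr) : Prop :=
  match e with
  | RVar _ | FVar _ | FALSE => True
  | Op o es => length es = ar o /\
      (fix go (l : list expr) : Prop :=
         match l with [] => True | a :: l' => wf_expr ar defs k a /\ go l' end) es
  | Eq a b | Imp a b => wf_expr ar defs k a /\ wf_expr ar defs k b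
  | All _ b | Nab b => wf_expr ar defs k b
  | Def d es => d < k /\
      (exists xs b, nth_error defs d = Some (xs, b) /\ length es = length xs) /\
      (fix go (l : list expr) : Prop :=
         match l with [] => True | a :: l' => wf_expr ar defs k a /\ go l' end) es
  end.

Definition wf_defs (ar : nat -> nat) (defs : list defn) : Prop :=
  forall k xs b, nth_error defs k = Some (xs, b) ->
    NoDup xs /\ incl (fv b) xs /\ wf_expr ar defs k b.

Fixpoint noflex (e : expr) : Prop :=
  match e with
  | RVar _ | FALSE => True
  | FVar _ | Nab _ => False
  | Op _ es | Def _ es =>
      (fix go (l : list expr) : Prop :=
         match l with [] => True | a :: l' => noflex a /\ go l' end) es
  | Eq a b | Imp a b => noflex a /\ noflex b
  | All _ b => noflex b
  end.

Definition rigid (defs : list defn) (e : expr) : Prop := noflex (full_expand defs e).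

Record kripke : Type := {
  D : Type;
  tt : D;
  ff : D;
  tt_ff : tt <> ff;
  Iop : nat -> list D -> D;
  xi : nat -> D;
  W : Type;
  W_inh : inhabited W;
  R : W -> W -> Prop;
  zeta : nat -> W -> D;
  nab : (D -> Prop) -> D;
  nab_spec : forall S : D -> Prop, nab S = tt <-> (forall v, S v -> v = tt)
}.

Definition set_xi (M : kripke) (xi' : nat -> D M) : kripke :=
  {| D := D M; tt := tt M; ff := ff M; tt_ff := tt_ff M; Iop := Iop M;
     xi := xi'; W := W M; W_inh := W_inh M; R := R M; zeta := zeta M;
     nab := nab M; nab_spec := nab_spec M |}.

Definition bool_val (M : kripke) (P : Prop) : D M :=
  if excluded_middle_informative P then tt M else ff M.

Fixpoint core (M : kripke) (rho : nat -> D M) (w : W M) (e : expr) {struct e} : D M :=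
  match e with
  | RVar x => rho x
  | FVar v => zeta M v w
  | Op o es => Iop M o (map (core M rho w) es)
  | Eq a b => bool_val M (core M rho w a = core M rho w b)
  | FALSE => ff M
  | Imp a b => bool_val M (core M rho w a <> tt M \/ core M rho w b = tt M)
  | All x b => bool_val M (forall a : D M, core M (upd rho x a) w b = tt M)
  | Nab b => nab M (fun v => exists w', R M w w' /\ core M rho w' b = v)
  | Def _ _ => ff M (* never reached on fully expanded expressions *)
  end.

(* [[e]]^M_w : value of e, defined operators being expanded
   (the clause [[d(e..)]] = [[body[e../x..]]] holds up to this expansion) *)
Definition sem (defs : list defn) (M : kripke) (w : W M) (e : expr) : D M :=
  core M (xi M) w (full_expand defs e).

(* e_1..e_{i-1}, y, e_{i+1}..e_n  (0-based index i) *)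
Definition replace_nth (i : nat) (y : expr) (es : list expr) : list expr :=
  firstn i es ++ y :: skipn (S i) es.

(* Main.v *)
Require Import Defs.
From Stdlib Require Import List Arith Lia ClassicalEpsilon FunctionalExtensionality PropExtensionality.
Import ListNotations.
Unset Implicit Arguments.

Section Ind.
Variable P : expr -> Prop.
Hypothesis hR : forall x, P (RVar x).
Hypothesis hF : forall v, P (FVar v).
Hypothesis hO : forall o es, Forall P es -> P (Op o es).
Hypothesis hE : forall a b, P a -> P b -> P (Eq a b).
Hypothesis hFa : P FALSE.
Hypothesis hI : forall a b, P a -> P b -> P (Imp a b).
Hypothesis hA : forall x b, P b -> P (All x b).
Hypothesis hN : forall b, P b -> P (Nab b).
Hypothesis hD : forall d es, Forall P es -> P (Def d es).
Fixpoint eind (e : expr) : P e :=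
  match e with
  | RVar x => hR x
  | FVar v => hF v
  | Op o es => hO o es ((fix go (l : list expr) : Forall P l :=
       match l with [] => Forall_nil _ | a :: l' => @Forall_cons _ P a l' (eind a) (go l') end) es)
  | Eq a b => hE a b (eind a) (eind b)
  | FALSE => hFa
  | Imp a b => hI a b (eind a) (eind b)
  | All x b => hA x b (eind b)
  | Nab b => hN b (eind b)
  | Def d es => hD d es ((fix go (l : list expr) : Forall P l :=
       match l with [] => Forall_nil _ | a :: l' => @Forall_cons _ P a l' (eind a) (go l') end) es)
  end.
End Ind.

Lemma bool_val_iff M P Q : (P <-> Q) -> bool_val M P = bool_val M Q.
Proof.
  intros H; unfold bool_val.
  destruct (excluded_middle_informative P), (excluded_middle_informative Q); tauto.
Qed.

Lemma map_ext_Forall {A B} (f g : A -> B) l :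
  Forall (fun a => f a = g a) l -> map f l = map g l.
Proof. induction 1; simpl; f_equal; auto. Qed.

Lemma coinc M e : forall rho1 rho2 w,
  (forall z, In z (fv e) -> rho1 z = rho2 z) -> core M rho1 w e = core M rho2 w e.
Proof.
  induction e using eind; intros rho1 rho2 w Hz; simpl in *; auto.
  - f_equal. apply map_ext_Forall. rewrite Forall_forall in *.
    intros a Ha; apply H; auto. intros z Hz'; apply Hz, in_flat_map; eauto.
  - apply bool_val_iff. rewrite (IHe1 rho1 rho2), (IHe2 rho1 rho2); [tauto| |];
      intros; apply Hz, in_or_app; auto.
  - apply bool_val_iff. rewrite (IHe1 rho1 rho2), (IHe2 rho1 rho2); [tauto| |];
      intros; apply Hz, in_or_app; auto.
  - apply bool_val_iff. split; intros H a; [rewrite <- (IHe (upd rho1 x a)) | rewrite (IHe _ (upd rho2 x a))]; auto;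
      intros z Hz'; unfold upd; destruct (Nat.eqb_spec z x); auto;
      first [apply Hz, in_in_remove; auto | symmetry; apply Hz, in_in_remove; auto].
  - f_equal. apply FunctionalExtensionality.functional_extensionality; intro v.
    apply PropExtensionality.propositional_extensionality.
    split; intros [w' [H1 H2]]; exists w'; split; auto; rewrite <- H2; [symmetry|]; apply IHe; auto.
Qed.

Lemma le_list_max n l : In n l -> n <= list_max l.
Proof.
  intros H. pose proof (proj1 (list_max_le l (list_max l)) (le_n _)) as F.
  rewrite Forall_forall in F; auto.
Qed.

Lemma fv_maxv e : forall z, In z (fv e) -> z <= maxv e.
Proof.
  induction e using eind; intros z Hz; simpl in *; try tauto.
  - destruct Hz; [lia|tauto].
  - apply in_flat_map in Hz as [a [Ha Hz]]. rewrite Forall_forall in H.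
    eapply Nat.le_trans; [apply H; eauto|]. apply le_list_max, in_map; auto.
  - apply in_app_or in Hz as [Hz|Hz]; [specialize (IHe1 _ Hz)|specialize (IHe2 _ Hz)]; lia.
  - apply in_app_or in Hz as [Hz|Hz]; [specialize (IHe1 _ Hz)|specialize (IHe2 _ Hz)]; lia.
  - apply in_remove in Hz as [Hz _]. specialize (IHe _ Hz); lia.
  - auto.
  - apply in_flat_map in Hz as [a [Ha Hz]]. rewrite Forall_forall in H.
    eapply Nat.le_trans; [apply H; eauto|]. apply le_list_max, in_map; auto.
Qed.

Lemma subst2 M e : forall rho1 rho2 s1 s2 w,
  (forall z, In z (fv e) -> forall w', core M rho1 w' (s1 z) = core M rho2 w' (s2 z)) ->
  core M rho1 w (subst s1 e) = core M rho2 w (subst s2 e).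
Proof.
  induction e using eind; intros rho1 rho2 s1 s2 w Hz; simpl in *; auto.
  - f_equal. rewrite !map_map. apply map_ext_Forall. rewrite Forall_forall in *.
    intros a Ha; apply H; auto. intros z Hz'; apply Hz, in_flat_map; eauto.
  - apply bool_val_iff. rewrite (IHe1 rho1 rho2 s1 s2), (IHe2 rho1 rho2 s1 s2); [tauto| |];
      intros; apply Hz, in_or_app; auto.
  - apply bool_val_iff. rewrite (IHe1 rho1 rho2 s1 s2), (IHe2 rho1 rho2 s1 s2); [tauto| |];
      intros; apply Hz, in_or_app; auto.
  - set (y1 := S _). set (y2 := S _).
    assert (K : forall a, core M (upd rho1 y1 a) w (subst (upd s1 x (RVar y1)) e) =
                     core M (upd rho2 y2 a) w (subst (upd s2 x (RVar y2)) e)).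
    { intro a. apply IHe. intros z Hz' w'. unfold upd at 2 4.
      destruct (Nat.eqb_spec z x).
      - simpl. unfold upd. rewrite !Nat.eqb_refl. auto.
      - assert (Hr : In z (remove Nat.eq_dec x (fv e))) by (apply in_in_remove; auto).
        rewrite (coinc M (s1 z) (upd rho1 y1 a) rho1), (coinc M (s2 z) (upd rho2 y2 a) rho2).
        + apply Hz; auto.
        + intros u Hu. unfold upd. destruct (Nat.eqb_spec u y2); auto.
          exfalso. apply fv_maxv in Hu. subst u.
          assert (maxv (s2 z) <= list_max (map (fun z => maxv (s2 z)) (remove Nat.eq_dec x (fv e)))).
          { apply le_list_max. apply in_map_iff; eauto. }
          unfold y2 in Hu. lia.
        + intros u Hu. unfold upd. destruct (Nat.eqb_spec u y1); auto.
          exfalso. apply fv_maxv in Hu. subst u.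
          assert (maxv (s1 z) <= list_max (map (fun z => maxv (s1 z)) (remove Nat.eq_dec x (fv e)))).
          { apply le_list_max. apply in_map_iff; eauto. }
          unfold y1 in Hu. lia. }
    apply bool_val_iff. split; intros H a; [rewrite <- K | rewrite K]; auto.
  - f_equal. apply functional_extensionality; intro v.
    apply propositional_extensionality.
    split; intros [w' [H1 H2]]; exists w'; split; auto; rewrite <- H2; [symmetry|]; apply IHe; auto.
Qed.

Lemma noflex_w M e : noflex e -> forall rho w w', core M rho w e = core M rho w' e.
Proof.
  induction e using eind; intros Hn rho w w'; simpl in *; try tauto; auto.
  - assert (F : Forall noflex es) by (clear -Hn; induction es; simpl in *; constructor; tauto).
    f_equal. apply map_ext_Forall. rewrite Forall_forall in *. intros; apply H; auto.
  - destruct Hn. rewrite (IHe1 H rho w w'), (IHe2 H0 rho w w'); auto.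
  - destruct Hn. rewrite (IHe1 H rho w w'), (IHe2 H0 rho w w'); auto.
  - apply bool_val_iff. split; intros K a; [rewrite <- (IHe Hn _ w w') | rewrite (IHe Hn _ w w')]; auto.
Qed.

Lemma core_set_xi M xi' e : forall rho w, core (set_xi M xi') rho w e = core M rho w e.
Proof.
  induction e using eind; intros rho w; simpl; auto.
  - f_equal. apply map_ext_Forall. rewrite Forall_forall in *. intros; apply H; auto.
  - rewrite IHe1, IHe2; reflexivity.
  - rewrite IHe1, IHe2; reflexivity.
  - unfold bool_val; simpl. destruct excluded_middle_informative as [h|h];
    destruct excluded_middle_informative as [h'|h']; auto; exfalso;
    [apply h'|apply h]; intro a; [rewrite <- IHe|rewrite IHe]; auto.
  - f_equal. apply functional_extensionality; intro v.
    apply propositional_extensionality. split; intros [w' [H1 H2]]; exists w'; split; auto;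
    rewrite <- H2; [symmetry|]; apply IHe.
Qed.

Lemma fv_subst s e : forall y, In y (fv (subst s e)) -> exists z, In z (fv e) /\ In y (fv (s z)).
Proof.
  revert s. induction e using eind; intros s y Hy; simpl in *; try tauto.
  - exists x; auto.
  - rewrite flat_map_concat_map, map_map, <- flat_map_concat_map in Hy.
    apply in_flat_map in Hy as [a [Ha Hy]]. rewrite Forall_forall in H.
    destruct (H a Ha s y Hy) as [z [Hz1 Hz2]]. exists z; split; auto. apply in_flat_map; eauto.
  - apply in_app_or in Hy as [Hy|Hy]; [destruct (IHe1 s y Hy) as [z [? ?]]|destruct (IHe2 s y Hy) as [z [? ?]]];
      exists z; split; auto; apply in_or_app; auto.
  - apply in_app_or in Hy as [Hy|Hy]; [destruct (IHe1 s y Hy) as [z [? ?]]|destruct (IHe2 s y Hy) as [z [? ?]]];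
      exists z; split; auto; apply in_or_app; auto.
  - apply in_remove in Hy as [Hy Hne].
    destruct (IHe _ _ Hy) as [z [Hz1 Hz2]]. unfold upd in Hz2.
    destruct (Nat.eqb_spec z x).
    + simpl in Hz2. destruct Hz2; [congruence|tauto].
    + exists z; split; auto. apply in_in_remove; auto.
  - apply IHe; auto.
  - rewrite flat_map_concat_map, map_map, <- flat_map_concat_map in Hy.
    apply in_flat_map in Hy as [a [Ha Hy]]. rewrite Forall_forall in H.
    destruct (H a Ha s y Hy) as [z [Hz1 Hz2]]. exists z; split; auto. apply in_flat_map; eauto.
Qed.

Lemma mk_sub_in xs : forall A A' z, length A = length xs -> length A' = length xs -> In z xs ->
  exists j, j < length A /\ mk_sub xs A z = nth j A FALSE /\ mk_sub xs A' z = nth j A' FALSE.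
Proof.
  induction xs as [|x xs IH]; intros A A' z H1 H2 Hz; [destruct Hz|].
  destruct A as [|a A]; [discriminate|]. destruct A' as [|a' A']; [discriminate|].
  simpl in *. destruct (Nat.eqb_spec z x).
  - exists 0; simpl; repeat split; lia.
  - destruct Hz as [Hz|Hz]; [congruence|].
    destruct (IH A A' z) as [j [? [? ?]]]; auto.
    exists (S j); simpl; repeat split; auto; lia.
Qed.

Lemma replace_nth_S i y a l : replace_nth (S i) y (a :: l) = a :: replace_nth i y l.
Proof. reflexivity. Qed.

Lemma map_replace_nth (f : expr -> expr) i y l :
  map f (replace_nth i y l) = replace_nth i (f y) (map f l).
Proof.
  revert i; induction l; intros [|i]; try (unfold replace_nth; simpl; reflexivity).
  rewrite replace_nth_S; simpl; rewrite replace_nth_S; f_equal; auto.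
Qed.

Lemma length_replace_nth i y l : i < length l -> length (replace_nth i y l) = length l.
Proof.
  revert i; induction l; intros [|i] H; try (simpl in *; lia); try (unfold replace_nth; simpl; reflexivity).
  rewrite replace_nth_S; simpl in *; rewrite IHl; auto; lia.
Qed.

Lemma nth_replace_nth i y l j : i < length l ->
  nth j (replace_nth i y l) FALSE = if Nat.eqb j i then y else nth j l FALSE.
Proof.
  revert i j; induction l; intros [|i] [|j] H; try (simpl in *; lia); try (unfold replace_nth; simpl; reflexivity).
  rewrite replace_nth_S; simpl in *; apply IHl; lia.
Qed.

Lemma go_Forall (P : expr -> Prop) (Q : expr -> Prop) es :
  Forall (fun a => Q a -> P a) es ->
  (fix go (l : list expr) : Prop := match l with [] => True | a :: l' => Q a /\ go l' end) es ->
  Forall P es.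
Proof. induction 1; intros G; constructor; tauto. Qed.

Lemma fv_expand ar defs tbl k e :
  (forall d, d < k -> forall xs b, nth_error defs d = Some (xs,b) -> exists b', nth_error tbl d = Some (xs,b')) ->
  (forall d xs' b', nth_error tbl d = Some (xs',b') -> incl (fv b') xs') ->
  wf_expr ar defs k e -> incl (fv (expand tbl e)) (fv e).
Proof.
  intros Htb Hinc. induction e using eind; intros Hwf; simpl in *; try apply incl_refl.
  - destruct Hwf as [_ Hg]. apply (go_Forall _ _ es H) in Hg.
    intros y Hy. rewrite flat_map_concat_map, map_map, <- flat_map_concat_map in Hy.
    apply in_flat_map in Hy as [a [Ha Hy]]. rewrite Forall_forall in Hg.
    apply in_flat_map; exists a; split; auto; apply Hg; auto.
  - destruct Hwf. apply incl_app; [apply incl_appl|apply incl_appr]; auto.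
  - destruct Hwf. apply incl_app; [apply incl_appl|apply incl_appr]; auto.
  - intros y Hy. apply in_remove in Hy as [Hy Hne]. apply in_in_remove; auto. apply IHe; auto.
  - auto.
  - destruct Hwf as [Hd [[xs [b [Hnb Hlen]]] Hg]]. apply (go_Forall _ _ es H) in Hg.
    destruct (Htb d Hd xs b Hnb) as [b' Hb']. 
    match goal with |- context [match ?t with Some _ => _ | None => _ end] =>
      replace t with (Some (xs, b')) by (symmetry; exact Hb') end.
    intros y Hy. apply fv_subst in Hy as [z [Hz Hy]].
    apply (Hinc _ _ _ Hb') in Hz.
    destruct (mk_sub_in xs (map (expand tbl) es) (map (expand tbl) es) z) as [j [Hj [Hm _]]];
      rewrite ?length_map; auto.
    rewrite Hm in Hy. rewrite length_map in Hj.
    change FALSE with (expand tbl FALSE) in Hy. rewrite map_nth in Hy.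
    rewrite Forall_forall in Hg. apply in_flat_map. exists (nth j es FALSE).
    split; [apply nth_In; auto|]. apply Hg; auto. apply nth_In; auto.
Qed.

Lemma exp_table_app l p : exp_table (l ++ [p]) = exp_table l ++ [(fst p, expand (exp_table l) (snd p))].
Proof. unfold exp_table. rewrite fold_left_app. reflexivity. Qed.

Lemma table_inv ar defs : wf_defs ar defs -> forall l r, l ++ r = defs ->
 length (exp_table l) = length l /\
 (forall d xs b, nth_error l d = Some (xs,b) -> exists b', nth_error (exp_table l) d = Some (xs,b')) /\
 (forall d xs' b', nth_error (exp_table l) d = Some (xs',b') -> incl (fv b') xs').
Proof.
  intros Hwf l. induction l as [|p l IH] using rev_ind; intros r Hr.
  - simpl. repeat split; intros [|d]; simpl; discriminate.
  - destruct (IH (p :: r)) as [IH1 [IH2 IH3]]. { rewrite <- Hr, <- app_assoc; reflexivity. }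
    destruct p as [xs b].
    assert (Hn : nth_error defs (length l) = Some (xs, b)).
    { rewrite <- Hr, <- app_assoc, nth_error_app2, Nat.sub_diag; auto. }
    destruct (Hwf _ _ _ Hn) as [_ [Hi Hw]].
    rewrite exp_table_app. simpl fst; simpl snd.
    assert (Hfe : incl (fv (expand (exp_table l) b)) xs).
    { eapply incl_tran; [|exact Hi]. eapply fv_expand; [|exact IH3|exact Hw].
      intros d Hd xs0 b0 Hnd. eapply IH2.
      rewrite <- Hr, <- app_assoc, nth_error_app1 in Hnd; eauto. }
    repeat split.
    + rewrite !length_app, IH1; reflexivity.
    + intros d xs0 b0 Hd. rewrite nth_error_app in Hd |- *. rewrite IH1.
      destruct (Nat.ltb_spec d (length l)); [eauto|].
      destruct (d - length l) as [|m]; simpl in *; [|destruct m; simpl in *; discriminate].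
      inversion Hd; subst; eauto.
    + intros d xs0 b0 Hd. rewrite nth_error_app in Hd. rewrite IH1 in Hd.
      destruct (Nat.ltb_spec d (length l)); [eauto|].
      destruct (d - length l) as [|m]; simpl in *; [|destruct m; simpl in *; discriminate].
      inversion Hd; subst; auto.
Qed.

Theorem lemma1 (ar : nat -> nat) (defs : list defn) (d : nat) (xs : list nat)
  (body : expr) (es : list expr) (i : nat) (M : kripke) (w : W M) (x : nat) :
  wf_defs ar defs ->
  nth_error defs d = Some (xs, body) ->
  length es = length xs ->
  (forall e, In e es -> wf_expr ar defs (length defs) e) ->
  i < length es ->
  rigid defs (nth i es FALSE) ->
  (forall e, In e es -> ~ In x (fv e)) ->
  sem defs M w (Def d es) =
  sem defs (set_xi M (upd (xi M) x (sem defs M w (nth i es FALSE)))) w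
      (Def d (replace_nth i (RVar x) es)).
Proof.
  intros Hwf Hd Hlen Hwfe Hi Hrig Hx.
  destruct (table_inv ar defs Hwf defs [] (app_nil_r _)) as [T1 [T2 T3]].
  destruct (T2 _ _ _ Hd) as [b' Hb'].
  set (v := sem defs M w (nth i es FALSE)).
  unfold sem at 1 2. rewrite core_set_xi. cbn [xi set_xi].
  unfold full_expand. set (tbl := exp_table defs) in *.
  cbn [expand].
  match goal with |- context [match ?t with Some _ => _ | None => _ end] =>
      replace t with (Some (xs, b')) by (symmetry; exact Hb') end.
  rewrite map_replace_nth. cbn [expand].
  apply subst2. intros z Hz w'.
  apply (T3 _ _ _ Hb') in Hz.
  set (A := map (expand tbl) es).
  assert (HA : length A = length xs) by (unfold A; rewrite length_map; auto).
  destruct (mk_sub_in xs A (replace_nth i (RVar x) A) z) as [j [Hj [E1 E2]]]; auto.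
  { rewrite length_replace_nth; auto. unfold A; rewrite length_map; auto. }
  rewrite E1, E2. rewrite nth_replace_nth by (unfold A; rewrite length_map; auto).
  assert (HnA : forall k, nth k A FALSE = expand tbl (nth k es FALSE)).
  { intro k. unfold A. change FALSE with (expand tbl FALSE) at 1. apply map_nth. }
  unfold A in Hj; rewrite length_map in Hj.
  destruct (Nat.eqb_spec j i).
  - subst j. cbn [core]. unfold upd. rewrite Nat.eqb_refl. rewrite HnA.
    unfold v, sem, full_expand. fold tbl. apply noflex_w. exact Hrig.
  - rewrite HnA. apply coinc. intros u Hu.
    assert (Hin : In (nth j es FALSE) es) by (apply nth_In; auto).
    eapply fv_expand in Hu; [| | exact T3 | apply Hwfe; exact Hin].
    + unfold upd. destruct (Nat.eqb_spec u x); auto. subst u. exfalso. eapply Hx; eauto.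
    + intros d0 _ xs0 b0 H0. eauto.
Qed.
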